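(* Let $p\in(0,1)$ and $q=-\log(1-p)$. For rectangles $R\subseteq R'$ with $\dim(R)=(a,b)$ and $\dim(R')=(a+s,b+t)$, $$ \mathbb{P}_p\big[D(R,R')\big]\le \exp\Big(-s\,g(bq)-t\,g(aq)+2[g(bq)+g(aq)]+st\,q\,e^{2[g(bq)+g(aq)]}\Big). $$
   Context: Under $\mathbb{P}_p$, the initial configuration $\sigma$ assigns independent states to sites of $\mathbb{Z}^2$: the origin is active with probability $p$, else empty; every other site is occupied with probability $p$, else empty. A rectangle is $\{a,\dots,c\}\times\{b,\dots,d\}\subset\mathbb{Z}^2$ with dimensions $(c-a+1,d-b+1)$; columns are $\{x\}\times\{b,\dots,d\}$ and rows $\{a,\dots,c\}\times\{y\}$. A rectangle has a double gap in the columns (resp. rows) if two consecutive columns (resp. rows) consist entirely of empty sites in $\sigma$. For $R=\{x_1,\dots,x_2\}\times\{y_1,\dots,y_2\}\subseteq R'=\{X_1,\dots,X_2\}\times\{Y_1,\dots,Y_2\}$, $D(R,R')$ is the event that each of the (possibly empty) rectangles $\{X_1,\dots,x_1-1\}\times\{Y_1,\dots,Y_2\}$ and $\{x_2+1,\dots,X_2\}\times\{Y_1,\dots,Y_2\}$ has no double gap in the columns, and each of $\{X_1,\dots,X_2\}\times\{Y_1,\dots,y_1-1\}$ and $\{X_1,\dots,X_2\}\times\{y_2+1,\dots,Y_2\}$ has no double gap in the rows. Also $\beta(u)=\frac{u+\sqrt{u(4-3u)}}{2}$ and $g(z)=-\log\beta(1-e^{-z})$ for $z>0$. *)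

(* Defs.v *)
From HB Require Import structures.
From mathcomp Require Import all_boot all_order all_algebra.
From mathcomp Require Import boolp reals sequences exp.
Set Implicit Arguments. Unset Strict Implicit. Unset Printing Implicit Defensive.
Import Order.TTheory GRing.Theory Num.Theory.
Local Open Scope ring_scope.

Definition state := option bool.
Definition Empty : state := None.
Definition Occupied : state := Some false.
Definition Active : state := Some true.

Definition site := (int * int)%type.
Definition config := site -> state.

(* rectangle {x1..x2} x {y1..y2} *)
Record rect := Rect { rx1 : int; rx2 : int; ry1 : int; ry2 : int }.

Definition subrect (R R' : rect) : Prop :=
  [/\ rx1 R' <= rx1 R, rx2 R <= rx2 R', ry1 R' <= ry1 R & ry2 R <= ry2 R'].

Definition rwidth (R : rect) : int := rx2 R - rx1 R + 1.
Definition rheight (R : rect) : int := ry2 R - ry1 R + 1.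

Definition col_empty (s : config) (x y1 y2 : int) : Prop :=
  forall y : int, y1 <= y <= y2 -> s (x, y) = Empty.
Definition row_empty (s : config) (x1 x2 y : int) : Prop :=
  forall x : int, x1 <= x <= x2 -> s (x, y) = Empty.

Definition no_dgap_cols (s : config) (x1 x2 y1 y2 : int) : Prop :=
  ~ exists x : int, [/\ x1 <= x, x + 1 <= x2,
                        col_empty s x y1 y2 & col_empty s (x + 1) y1 y2].
Definition no_dgap_rows (s : config) (x1 x2 y1 y2 : int) : Prop :=
  ~ exists y : int, [/\ y1 <= y, y + 1 <= y2,
                        row_empty s x1 x2 y & row_empty s x1 x2 (y + 1)].

Definition Dev (R R' : rect) (s : config) : Prop :=
  [/\ no_dgap_cols s (rx1 R') (rx1 R - 1) (ry1 R') (ry2 R'),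
      no_dgap_cols s (rx2 R + 1) (rx2 R') (ry1 R') (ry2 R'),
      no_dgap_rows s (rx1 R') (rx2 R') (ry1 R') (ry1 R - 1) &
      no_dgap_rows s (rx1 R') (rx2 R') (ry2 R + 1) (ry2 R')].

Definition site_law {R : realType} (p : R) (z : site) (st : state) : R :=
  if z == (0%Z, 0%Z) then
    match st with Some true => p | None => 1 - p | Some false => 0 end
  else
    match st with Some false => p | None => 1 - p | Some true => 0 end.

Definition winW (W : rect) : nat := `|rwidth W|%N.
Definition winH (W : rect) : nat := `|rheight W|%N.
Definition wsite (W : rect) (ij : 'I_(winW W) * 'I_(winH W)) : site :=
  (rx1 W + (ij.1 : nat)%:Z, ry1 W + (ij.2 : nat)%:Z).

(* configuration on Z^2 determined by the window configuration w
   (sites outside the window are set to Empty; irrelevant for events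
   depending only on the window) *)
Definition extend (W : rect) (w : {ffun 'I_(winW W) * 'I_(winH W) -> state})
  : config :=
  fun z => if [pick ij | wsite ij == z] is Some ij then w ij else Empty.

(* P_p[E] for an event E depending only on the sites of the window W:
   the marginal of the product measure P_p on the (finite) window. *)
Definition Pp {R : realType} (p : R) (W : rect) (E : config -> Prop) : R :=
  \sum_(w : {ffun 'I_(winW W) * 'I_(winH W) -> state})
     (\prod_(ij : 'I_(winW W) * 'I_(winH W)) site_law p (wsite ij) (w ij))
     * (if `[< E (extend w) >] then 1 else 0).

Definition beta {R : realType} (u : R) : R := (u + Num.sqrt (u * (4 - 3 * u))) / 2.
Definition gfun {R : realType} (z : R) : R := - ln (beta (1 - expR (- z))).

(* Main.v *)
Require Import Defs.
From HB Require Import structures.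
From mathcomp Require Import all_boot all_order all_algebra.
From mathcomp Require Import boolp reals sequences exp.
From mathcomp Require Import zify ring lra.
Import Order.TTheory GRing.Theory Num.Theory.
Local Open Scope ring_scope.

Section Frame.
Variable (R : realType) (I : finType) (mu : I -> state -> R).
Hypothesis mu_ge0 : forall i st, 0 <= mu i st.
Hypothesis mu_sum : forall i, \sum_st mu i st = 1.

Definition cfg := {ffun I -> state}.
Definition EE (F : cfg -> R) := \sum_(w : cfg) (\prod_i mu i (w i)) * F w.
Definition upd (w : cfg) i st : cfg := [ffun j => if j == i then st else w j].
Definition Int i (F : cfg -> R) : cfg -> R := fun w => \sum_st mu i st * F (upd w i st).
Definition IntL (l : seq I) F := foldr Int F l.
Definition indep i (F : cfg -> R) := forall w st, F (upd w i st) = F w.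

Lemma updE w i st j : upd w i st j = if j == i then st else w j.
Proof. by rewrite ffunE. Qed.
Lemma upd_same w i st st' : upd (upd w i st) i st' = upd w i st'.
Proof. by apply/ffunP=> j; rewrite !updE; case: eqP. Qed.
Lemma upd_id w i : upd w i (w i) = w.
Proof. by apply/ffunP=> j; rewrite !updE; case: eqP => // ->. Qed.
Lemma upd_comm w i j st st' : i != j -> upd (upd w i st) j st' = upd (upd w j st') i st.
Proof.
move=> ij; apply/ffunP=> k; rewrite !updE.
case: (eqVneq k j) => [ekj|nkj]; case: (eqVneq k i) => [eki|nki] //.
by move: ij; rewrite -eki -ekj eqxx.
Qed.

Lemma prod_upd w i st :
  (\prod_j mu j (upd w i st j)) * mu i (w i) = (\prod_j mu j (w j)) * mu i st.
Proof.
rewrite (bigD1 i) //= [in RHS](bigD1 i) //= updE eqxx.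
rewrite (eq_bigr (fun j => mu j (w j))); last by move=> j /negbTE jn; rewrite updE jn.
ring.
Qed.

Lemma E_Int i F : EE (Int i F) = EE F.
Proof.
rewrite /EE /Int.
transitivity (\sum_(w : cfg) \sum_(st : state) (\prod_j mu j (w j)) * mu i st * F (upd w i st)).
  by apply: eq_bigr => w _; rewrite mulr_sumr; apply: eq_bigr => st _; rewrite mulrA.
rewrite pair_big /=.
pose h := fun pr : cfg * state => (upd pr.1 i pr.2, pr.1 i).
have hinj : injective h.
  case=> w st [w' st'] [] e1 e2.
  have est : st = st' by move: (congr1 (fun f : cfg => f i) e1); rewrite !updE eqxx.
  subst st'; congr pair.
  by rewrite -(upd_id w i) -(upd_id w' i) -e2 -(upd_same w i st) e1 upd_same.
rewrite (reindex_inj hinj) /=.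
transitivity (\sum_(pr : cfg * state) (\prod_j mu j (pr.1 j)) * mu i pr.2 * F pr.1).
  apply: eq_bigr => -[w st] _ /=.
  by rewrite upd_same upd_id prod_upd.
rewrite -(pair_big xpredT xpredT (fun (w : cfg) (st : state) => (\prod_j mu j (w j)) * mu i st * F w)) /=.
apply: eq_bigr => w _.
rewrite -[in RHS](mulr1 (F w)) -(mu_sum i) mulr_sumr mulr_sumr; apply: eq_bigr => st _.
ring.
Qed.

Lemma E_IntL l F : EE (IntL l F) = EE F.
Proof. by elim: l => //= i l IH; rewrite E_Int. Qed.

Lemma Int_const i F : indep i F -> Int i F = F.
Proof.
move=> hF; apply: funext => w; rewrite /Int.
rewrite (eq_bigr (fun st => mu i st * F w)); last by move=> st _; rewrite hF.
by rewrite -mulr_suml mu_sum mul1r.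
Qed.

Lemma IntL_const l F : (forall i, i \in l -> indep i F) -> IntL l F = F.
Proof.
elim: l => //= i l IH hl; rewrite IH ?Int_const //; first exact: hl (mem_head _ _).
by move=> j jl; apply: hl; rewrite inE jl orbT.
Qed.

Lemma Int_mull i F G : indep i F -> Int i (fun w => F w * G w) = (fun w => F w * Int i G w).
Proof.
move=> hF; apply: funext => w; rewrite /Int mulr_sumr; apply: eq_bigr => st _.
by rewrite hF mulrCA.
Qed.

Lemma Int_add i F G : Int i (fun w => F w + G w) = (fun w => Int i F w + Int i G w).
Proof.
apply: funext => w; rewrite /Int -big_split; apply: eq_bigr => st _; by rewrite mulrDr.
Qed.

Lemma Int_indep i j F : indep j F -> indep j (Int i F).
Proof.
move=> hF w st; rewrite /Int; apply: eq_bigr => st' _.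
case: (eqVneq i j) => [->|ij]; first by rewrite upd_same.
by rewrite upd_comm 1?eq_sym // hF.
Qed.

Lemma IntL_indep l j F : indep j F -> indep j (IntL l F).
Proof. by elim: l => //= i l IH hF; apply: Int_indep; apply: IH. Qed.

Lemma IntL_mull l F G : (forall i, i \in l -> indep i F) ->
  IntL l (fun w => F w * G w) = (fun w => F w * IntL l G w).
Proof.
elim: l => //= i l IH hl; rewrite IH; last by move=> j jl; apply: hl; rewrite inE jl orbT.
by apply: Int_mull; apply: hl; rewrite mem_head.
Qed.

Lemma IntL_mulr l F G : (forall i, i \in l -> indep i G) ->
  IntL l (fun w => F w * G w) = (fun w => IntL l F w * G w).
Proof.
move=> hl; have -> : (fun w => F w * G w) = (fun w => G w * F w) by apply: funext => w; rewrite mulrC.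
by rewrite IntL_mull //; apply: funext => w; rewrite mulrC.
Qed.

Lemma IntL_add l F G : IntL l (fun w => F w + G w) = (fun w => IntL l F w + IntL l G w).
Proof. by elim: l => //= i l IH; rewrite IH Int_add. Qed.

Lemma IntL_cat l1 l2 F : IntL (l1 ++ l2) F = IntL l1 (IntL l2 F).
Proof. by rewrite /IntL foldr_cat. Qed.

Lemma Int_le i F G : (forall w, F w <= G w) -> forall w, Int i F w <= Int i G w.
Proof. by move=> h w; apply: ler_sum => st _; apply: ler_wpM2l. Qed.

Lemma IntL_le l F G : (forall w, F w <= G w) -> forall w, IntL l F w <= IntL l G w.
Proof. by elim: l => //= i l IH h; apply: Int_le; apply: IH. Qed.

Lemma IntL_ge0 l F : (forall w, 0 <= F w) -> forall w, 0 <= IntL l F w.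
Proof.
move=> h w; have := IntL_le l (fun _ => 0) F h w.
by rewrite IntL_const //; move=> j _ w' st.
Qed.

Lemma EE_le F G : (forall w, F w <= G w) -> EE F <= EE G.
Proof.
move=> h; apply: ler_sum => w _; apply: ler_wpM2l => //.
by apply: prodr_ge0.
Qed.

Lemma EE_prod (Psi : I -> state -> R) :
  EE (fun w => \prod_i Psi i (w i)) = \prod_i \sum_st mu i st * Psi i st.
Proof.
rewrite bigA_distr_bigA /EE; apply: eq_bigr => w _; by rewrite -big_split.
Qed.

Lemma EE_scale c F : EE (fun w => c * F w) = c * EE F.
Proof. by rewrite /EE mulr_sumr; apply: eq_bigr => w _; rewrite mulrCA. Qed.

Definition dep_on (A : pred I) (F : cfg -> R) :=
  forall w w' : cfg, (forall i, A i -> w i = w' i) -> F w = F w'.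

Lemma dep_indep A F i : dep_on A F -> ~~ A i -> indep i F.
Proof.
move=> hF hi w st; apply: hF => j Aj; rewrite updE; case: eqP => // ej.
by move: hi; rewrite -ej Aj.
Qed.


Definition br (b : bool) : R := if b then 1 else 0.
Lemma br_and a b' : br (a && b') = br a * br b'.
Proof. by case: a; case: b'; rewrite /br /= ?mulr1 ?mulr0 ?mul0r. Qed.
Lemma br_ge0 a : 0 <= br a. Proof. by case: a; rewrite /br. Qed.
Lemma br_le1 a : br a <= 1. Proof. by case: a; rewrite /br. Qed.

Lemma IntL_opp l F : IntL l (fun w => - F w) = (fun w => - IntL l F w).
Proof.
have -> : (fun w => - F w) = (fun w => (fun _ => -1) w * F w).
  by apply: funext => w; rewrite mulN1r.
rewrite IntL_mull; first by apply: funext => w; rewrite mulN1r.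
by move=> i _ w st.
Qed.

Variable v0 : R.
Hypothesis mu_empty : forall i, mu i None = v0.

Lemma sumopt (f : option bool -> R) : \sum_(st : option bool) f st = f None + f (Some true) + f (Some false).
Proof.
rewrite (bigD1 None) // (bigD1 (Some true)) // (bigD1 (Some false)) //= big_pred0 ?addr0 ?addrA //.
by case=> [[]|].
Qed.

Lemma IntL_allempty l : uniq l ->
  IntL l (fun w => br (all (fun i => w i == None) l)) = (fun _ => v0 ^+ size l).
Proof.
elim: l => [|i l IH] /=; first by move=> _; apply: funext => w; rewrite expr0.
case/andP=> il ul.
have -> : (fun w : cfg => br ((w i == None) && all (fun i0 => w i0 == None) l)) =
          (fun w => br (w i == None) * br (all (fun i0 => w i0 == None) l)).
  by apply: funext => w; rewrite br_and.
rewrite IntL_mull; last first.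
  move=> j jl w st; rewrite updE; case: (eqVneq i j) => // ej; by move: il; rewrite ej jl.
rewrite IH //; apply: funext => w; rewrite /Int sumopt !updE eqxx /br /=.
by rewrite mu_empty !mul0r !mulr0 !addr0 mul1r exprS.
Qed.

Fixpoint Lch {C : eqType} (ce : C -> bool) (pe : bool) (cs : seq C) : bool :=
  match cs with
  | [::] => true
  | c :: cs' => ~~ (pe && ce c) && Lch ce (ce c) cs'
  end.

Section Chain.
Variable (C : eqType) (S : C -> seq I) (K : C -> cfg -> bool) (CE : C -> cfg -> bool).
Variables (G u v : R) (b : nat).
Let lam := expR (- G).
Hypothesis G0 : 0 <= G.
Hypothesis hu0 : 0 <= u.
Hypothesis hul : u <= lam.
Hypothesis hv : v = 1 - u.
Hypothesis hquad : lam ^+ 2 = u * lam + u * v.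
Hypothesis hv0 : 0 <= v0 <= 1.
Hypothesis hvb : v <= v0 ^+ b.

Definition pw (m : R) := expR (- G * m).
Definition kR cs w := (count (fun c => ~~ K c w) cs)%:R : R.
Definition nR (cs : seq C) := (size cs)%:R : R.
Definition BA cs w := match cs with [::] => 1 | c :: _ =>
  if K c w then pw (nR cs - 1 - 2 * kR cs w) else pw (nR cs - 2 * kR cs w) end.
Definition BB cs w := match cs with [::] => 1 | c :: _ =>
  if K c w then u / lam * pw (nR cs - 1 - 2 * kR cs w) else pw (nR cs - 2 * kR cs w) end.

Lemma lam_gt0 : 0 < lam. Proof. exact: expR_gt0. Qed.
Lemma lam_le1 : lam <= 1.
Proof. by rewrite /lam -expR0 ler_expR lerNl oppr0. Qed.
Lemma pwS m : pw (m + 1) = lam * pw m.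
Proof. by rewrite /pw mulrDr mulr1 expRD mulrC. Qed.
Lemma pw_le m m' : m' <= m -> pw m <= pw m'.
Proof. move=> h; rewrite /pw ler_expR; have h2 : 0 <= m - m' by rewrite subr_ge0. have := mulr_ge0 G0 h2; rewrite mulrBr !mulNr; lra. Qed.
Lemma pw_ge0 m : 0 <= pw m. Proof. exact: expR_ge0. Qed.

Lemma BA_congr cs w1 w2 : (forall c, c \in cs -> K c w1 = K c w2) -> BA cs w1 = BA cs w2 /\ BB cs w1 = BB cs w2.
Proof.
move=> h; have hk : kR cs w1 = kR cs w2.
  by rewrite /kR; congr (_%:R); apply: eq_in_count => c /h ->.
case: cs h hk => [|c cs] h hk //=; rewrite h ?mem_head //.
by rewrite /BA /BB hk.
Qed.

Lemma BA_le cs w : BA cs w <= pw (nR cs - 1 - 2 * kR cs w).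
Proof.
case: cs => [|c cs] /=.
  rewrite /nR /kR /= mulr0 subr0 sub0r /pw mulrN1 opprK -expR0 ler_expR //.
rewrite /BA; case: (K c w) => //; apply: pw_le; lra.
Qed.


Lemma chain (cs : seq C) :
  uniq (flatten [seq S c | c <- cs]) ->
  (forall c, c \in cs -> size (S c) <= b)%N ->
  (forall c i w st, c \in cs -> i \in flatten [seq S c | c <- cs] -> K c (upd w i st) = K c w) ->
  (forall c w, c \in cs -> CE c w = K c w && all (fun i => w i == None) (S c)) ->
  forall pe w, IntL (flatten [seq S c | c <- cs]) (fun w => br (Lch (CE^~ w) pe cs)) w
     <= (if pe then BB cs w else BA cs w).
Proof.
elim: cs => [|c cs IH] huq hs hK hCE pe w.
  by rewrite /= /br; case: pe.
rewrite map_cons /= IntL_cat.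
move: huq; rewrite /= cat_uniq => /and3P[uS hasS ul].
set l' := flatten [seq S c | c <- cs].
have sub : forall x, x \in cs -> x \in c :: cs by move=> x h; rewrite inE h orbT.
have catr : forall x, x \in l' -> x \in S c ++ l' by move=> x h; rewrite mem_cat h orbT.
have catl : forall x, x \in S c -> x \in S c ++ l' by move=> x h; rewrite mem_cat h.
have IH' := IH ul (fun c' h => hs c' (sub _ h))
   (fun c' i w' st h1 h2 => hK c' i w' st (sub _ h1) (catr _ h2))
   (fun c' w' h => hCE c' w' (sub _ h)).
have hCEc : forall w', CE c w' = K c w' && all (fun i => w' i == None) (S c).
  by move=> w'; apply: hCE; rewrite mem_head.
have indCE : forall i, i \in l' -> forall w' st, CE c (upd w' i st) = CE c w'.
  move=> i il w' st; rewrite !hCEc hK ?mem_head ?catr //; congr (_ && _).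
  apply: eq_in_all => j jS; rewrite updE; case: (eqVneq j i) => // ej.
  by move: hasS => /hasPn /(_ _ il); rewrite /= -ej jS.
set CEr := fun w' => br (CE c w').
set Lt := fun w' => br (Lch (CE^~ w') true cs).
set Lf := fun w' => br (Lch (CE^~ w') false cs).
have eqF : (fun w' => br (Lch (CE^~ w') pe (c :: cs))) =
   (fun w' => br (~~ (pe && CE c w')) * (CEr w' * Lt w' + (1 - CEr w') * Lf w')).
  apply: funext => w'; rewrite /CEr /Lt /Lf /=.
  by case: (CE c w'); case: pe; rewrite /br /=; ring.
rewrite eqF (IntL_mull l'); last first.
  by move=> i il w' st; rewrite indCE.
rewrite (IntL_add l') (IntL_mull l' CEr); last by move=> i il w' st; rewrite /CEr indCE.
rewrite (IntL_mull l' (fun w' => 1 - CEr w')); last by move=> i il w' st; rewrite /CEr indCE.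
have hpt : forall w', br (~~ (pe && CE c w')) * (CEr w' * IntL l' Lt w' + (1 - CEr w') * IntL l' Lf w')
    <= br (~~ (pe && CE c w')) * (CEr w' * BB cs w' + (1 - CEr w') * BA cs w').
  move=> w'; apply: ler_wpM2l; first exact: br_ge0.
  apply: lerD; apply: ler_wpM2l.
  - exact: br_ge0.
  - exact: (IH' true w').
  - by rewrite subr_ge0 br_le1.
  - exact: (IH' false w').
apply: le_trans (IntL_le _ _ _ hpt w) _.
have indB : forall i, i \in S c -> indep i (BA cs) /\ indep i (BB cs).
  move=> i iS; split=> w' st; have [h1 h2] := BA_congr cs (upd w' i st) w'
     (fun c' h => hK c' i w' st (sub _ h) (catl _ iS)) ; by [].
have hCEint : forall H, (forall i, i \in S c -> indep i H) ->
   IntL (S c) (fun w' => CEr w' * H w') = (fun w' => br (K c w') * v0 ^+ size (S c) * H w').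
  move=> H hH.
  have -> : (fun w' => CEr w' * H w') = (fun w' => (br (K c w') * H w') * br (all (fun i => w' i == None) (S c))).
    by apply: funext => w'; rewrite /CEr hCEc br_and; ring.
  rewrite IntL_mull; last first.
    move=> i iS w' st; rewrite hH // hK ?mem_head ?catl //.
  by rewrite IntL_allempty //; apply: funext => w'; ring.
have hNCEint : forall H, (forall i, i \in S c -> indep i H) ->
   IntL (S c) (fun w' => (1 - CEr w') * H w') = (fun w' => (1 - br (K c w') * v0 ^+ size (S c)) * H w').
  move=> H hH.
  have -> : (fun w' => (1 - CEr w') * H w') = (fun w' => H w' + - (CEr w' * H w')).
    by apply: funext => w'; ring.
  rewrite IntL_add IntL_opp hCEint // IntL_const //.
  by apply: funext => w'; ring.
set vc := v0 ^+ size (S c).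
have vc1 : vc <= 1 by rewrite /vc; case/andP: hv0 => h0 h1; apply: exprn_ile1.
have vcv : v <= vc.
  apply: le_trans hvb _; rewrite /vc; case/andP: hv0 => h0 h1.
  by apply: ler_wiXn2l => //; apply: hs; rewrite mem_head.
have lam0 := lam_gt0; have lam1 := lam_le1.
have ulam : u <= u / lam.
  by rewrite ler_pdivlMr // -[leRHS]mulr1; apply: ler_wpM2l.
have [iA iB] : (forall i, i \in S c -> indep i (BA cs)) /\ (forall i, i \in S c -> indep i (BB cs)).
  by split=> i iS; have [] := indB i iS.
clear eqF hpt.
have nRc : nR (c :: cs) = nR cs + 1 by rewrite /nR /= -addn1 natrD.
have kRc : kR (c :: cs) w = kR cs w + br (~~ K c w).
  by rewrite /kR /= natrD addrC; case: (K c w); rewrite /br /= ?mulr1n ?mulr0n.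
have hBAcs : BA cs w <= pw (nR cs - 1 - 2 * kR cs w) := BA_le cs w.
have hv' : 1 - vc <= u by rewrite hv in vcv; lra.
have vc0 : 0 <= vc by rewrite /vc; case/andP: hv0 => h0 _; apply: exprn_ge0.
have shape : (nR cs - 2 * kR cs w = 0 /\ BA cs w = 1 /\ BB cs w = 1)
   \/ (exists m, BA cs w = pw m /\ BB cs w = u / lam * pw m /\ m = nR cs - 1 - 2 * kR cs w)
   \/ (BA cs w = pw (nR cs - 2 * kR cs w) /\ BB cs w = pw (nR cs - 2 * kR cs w)).
  case E: cs => [|c' cs'].
    by left; rewrite /nR /kR /=; split => //; ring.
  right; rewrite /BA /BB; case: (K c' w).
    by left; exists (nR (c' :: cs') - 1 - 2 * kR (c' :: cs') w).
  by right.
have BAc : BA (c :: cs) w = if K c w then pw (nR (c :: cs) - 1 - 2 * kR (c :: cs) w)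
   else pw (nR (c :: cs) - 2 * kR (c :: cs) w) by [].
have BBc : BB (c :: cs) w = if K c w then u / lam * pw (nR (c :: cs) - 1 - 2 * kR (c :: cs) w)
   else pw (nR (c :: cs) - 2 * kR (c :: cs) w) by [].
case: pe.
- have -> : (fun w' => br (~~ (true && CE c w')) * (CEr w' * BB cs w' + (1 - CEr w') * BA cs w'))
      = (fun w' => (1 - CEr w') * BA cs w').
    by apply: funext => w'; rewrite /CEr /=; case: (CE c w'); rewrite /br /=; ring.
  rewrite hNCEint // -/vc nRc kRc.
  case Kc: (K c w); rewrite /br /=.
  + have -> : nR cs + 1 - 1 - 2 * (kR cs w + 0) = nR cs - 2 * kR cs w by ring.
    case: shape => [[h0 [hA hB]]|[[m [hA [hB hm]]]|[hA hB]]].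
    * rewrite hA h0 /pw mulr0 expR0; lra.
    * rewrite hA (_ : nR cs - 2 * kR cs w = m + 1); last by rewrite hm; ring.
      rewrite pwS mulrA divfK ?gt_eqF //; apply: ler_wpM2r; [exact: pw_ge0 | lra].
    * rewrite hA; apply: ler_wpM2r; [exact: pw_ge0 | lra].
  + rewrite mul0r subr0 mul1r; apply: le_trans hBAcs _; apply: pw_le; lra.
- have -> : (fun w' => br (~~ (false && CE c w')) * (CEr w' * BB cs w' + (1 - CEr w') * BA cs w'))
      = (fun w' => CEr w' * BB cs w' + (1 - CEr w') * BA cs w').
    by apply: funext => w'; rewrite /br /=; ring.
  rewrite IntL_add hCEint // hNCEint // -/vc nRc kRc.
  case Kc: (K c w); rewrite /br /=.
  + have -> : nR cs + 1 - 1 - 2 * (kR cs w + 0) = nR cs - 2 * kR cs w by ring.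
    case: shape => [[h0 [hA hB]]|[[m [hA [hB hm]]]|[hA hB]]].
    * rewrite hA hB h0 /pw mulr0 expR0; lra.
    * rewrite hA hB (_ : nR cs - 2 * kR cs w = m + 1); last by rewrite hm; ring.
      rewrite pwS.
      have hp := pw_ge0 m.
      have -> : 1 * vc * (u / lam * pw m) + (1 - 1 * vc) * pw m = (1 - vc * (1 - u / lam)) * pw m by ring.
      apply: ler_wpM2r => //.
      have h1 : 0 <= 1 - u / lam by rewrite subr_ge0 ler_pdivrMr // mul1r.
      have h2 : 1 - vc * (1 - u / lam) <= 1 - v * (1 - u / lam).
        by rewrite lerD2l lerN2; apply: ler_wpM2r.
      apply: le_trans h2 _.
      have -> : 1 - v * (1 - u / lam) = (lam - v * lam + v * u) / lam.
        by field; rewrite gt_eqF.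
      rewrite ler_pdivrMr // -expr2 hquad hv; lra.
    * rewrite hA hB; have -> : forall x : R, 1 * vc * x + (1 - 1 * vc) * x = x by move=> x; ring.
      by [].
  + rewrite !mul0r subr0 mul1r add0r; apply: le_trans hBAcs _; apply: pw_le; lra.
Qed.

End Chain.
End Frame.

Lemma flat_uniq (T : finType) (C : eqType) (f : T -> C) (P : pred T) (cs : seq C) :
  uniq cs -> uniq (flatten [seq [seq x <- enum T | (f x == c) && P x] | c <- cs]).
Proof.
elim: cs => [|c cs IH] //= /andP[cn ucs].
rewrite cat_uniq IH // filter_uniq ?enum_uniq //= andbT.
apply/hasPn => x /flatten_mapP[c' c'cs]; rewrite !mem_filter => /andP[/andP[/eqP fx _] _].
apply/negP => /andP[/andP[/eqP fx' _] _].
by move: cn; rewrite -fx' fx c'cs.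
Qed.

Lemma size_filt_le (T : finType) (C : eqType) (f : T -> C) (P : pred T) (c : C)
  (g : T -> nat) m n :
  {in [pred x | f x == c] &, injective g} ->
  (forall x, f x == c -> P x -> (m <= g x < m + n)%N) ->
  (size [seq x <- enum T | (f x == c) && P x] <= n)%N.
Proof.
move=> ginj hg.
set l := [seq x <- enum T | (f x == c) && P x].
have ul : uniq l by rewrite filter_uniq ?enum_uniq.
rewrite -(size_map g) -(size_iota m n).
apply: uniq_leq_size.
  rewrite map_inj_in_uniq //.
  by move=> x y; rewrite !mem_filter => /andP[/andP[hx _] _] /andP[/andP[hy _] _]; apply: ginj.
move=> y /mapP[x]; rewrite mem_filter => /andP[/andP[hx hP] _] ->.
by rewrite mem_iota; apply: hg.
Qed.

Lemma Lch_congr (C : eqType) (ce1 ce2 : C -> bool) pe cs :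
  (forall c, c \in cs -> ce1 c = ce2 c) -> Lch ce1 pe cs = Lch ce2 pe cs.
Proof.
elim: cs pe => [|c cs IH] pe //= h.
rewrite h ?mem_head // IH // => c' hc'; apply: h; by rewrite inE hc' orbT.
Qed.

Lemma Lch_adj N (ce : 'I_N -> bool) pe (cs : seq 'I_N) m n :
  map val cs = iota m n -> ~~ Lch ce pe cs ->
  (pe /\ exists2 c, c \in cs & (val c == m) && ce c) \/
  exists c c', [/\ c \in cs, c' \in cs, val c' = (val c).+1, ce c & ce c'].
Proof.
elim: cs pe m n => [|c cs IH] pe m n //=.
case: n => [|n] //= [hc hcs].
rewrite negb_and negbK => /orP[/andP[hpe hce]|hL].
  by left; split=> //; exists c; rewrite ?mem_head // hc eqxx.
case: (IH _ _ _ hcs hL) => [[hce [c' c'in /andP[/eqP hc' hce']]]|[x [y [hx hy hxy hcx hcy]]]].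
  right; exists c, c'; split => //; [by rewrite mem_head | by rewrite inE c'in orbT | by rewrite hc' hc].
right; exists x, y; split => //; by rewrite inE ?hx ?hy orbT.
Qed.

Definition inR m n (i : nat) := (m <= i < m + n)%N.

Lemma filter_iota_inR N m n : (m + n <= N)%N ->
  [seq i <- iota 0 N | inR m n i] = iota m n.
Proof.
move=> h.
have -> : N = (m + (n + (N - m - n)))%N by lia.
rewrite !iotaD !filter_cat add0n.
rewrite (eq_in_filter (a2 := pred0)); last by move=> x; rewrite mem_iota /inR => /andP[_ hx] /=; lia.
rewrite filter_pred0.
rewrite (eq_in_filter (a2 := predT)); last by move=> x; rewrite mem_iota /inR /= => ->.
rewrite filter_predT.
rewrite (eq_in_filter (a2 := pred0)); last by move=> x; rewrite mem_iota /inR => /andP[hx _] /=; lia.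
by rewrite filter_pred0 cats0.
Qed.

Lemma map_val_filter N m n : (m + n <= N)%N ->
  map val (filter (fun i : 'I_N => inR m n i) (enum 'I_N)) = iota m n.
Proof.
move=> h; rewrite -(@filter_iota_inR N m n h) -val_enum_ord.
by rewrite filter_map.
Qed.

Lemma sum_inR N m n : (m + n <= N)%N ->
  (\sum_(i < N) inR m n i = n)%N.
Proof.
move=> h; rewrite -(big_mkord xpredT (fun i => nat_of_bool (inR m n i))).
have -> : N = (m + (n + (N - m - n)))%N by lia.
set p := (m + (n + (N - m - n)))%N.
rewrite (@big_cat_nat _ _ _ m 0 p) ?leq_addr //=.
rewrite (@big_cat_nat _ _ _ (m + n) m p) ?leq_addr //=; last by rewrite /p addnA leq_addr.
rewrite big_nat_cond (eq_bigr (fun _ => 0%N)); last by move=> i /andP[/andP[_ hi] _]; rewrite /inR leqNgt hi.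
rewrite [X in (_ + (X + _))%N]big_nat_cond [X in (_ + (X + _))%N](eq_bigr (fun _ => 1%N)); last by move=> i /andP[/andP[h1 h2] _]; rewrite /inR h1 h2.
rewrite [X in (_ + (_ + X))%N]big_nat_cond [X in (_ + (_ + X))%N](eq_bigr (fun _ => 0%N)); last by move=> i /andP[/andP[h1 h2] _]; rewrite /inR ltnNge h1 andbF.
rewrite -!big_nat_cond !sum_nat_const_nat; lia.
Qed.

Lemma beta_props (R : realType) (u : R) : 0 < u <= 1 ->
  [/\ 0 < beta u, beta u <= 1, u <= beta u & beta u ^+ 2 = u * beta u + u * (1 - u)].
Proof.
case/andP=> u0 u1.
have D0 : 0 <= u * (4 - 3 * u) by apply: mulr_ge0; lra.
set sq := Num.sqrt (u * (4 - 3 * u)).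
have sq0 : 0 <= sq by apply: sqrtr_ge0.
have sq2 : sq ^+ 2 = u * (4 - 3 * u) by apply: sqr_sqrtr.
rewrite /beta -/sq.
have hle : sq <= 2 - u.
  have : sq ^+ 2 <= (2 - u) ^+ 2 by rewrite sq2; nra.
  rewrite -[_ <= _]/(_) ler_sqr ?nnegrE //; lra.
have hge : u <= sq.
  have : u ^+ 2 <= sq ^+ 2 by rewrite sq2; nra.
  rewrite ler_sqr ?nnegrE //; lra.
split; [lra|lra|lra|].
transitivity ((u ^+ 2 + 2 * u * sq + sq ^+ 2) / 4); first by field; lra.
rewrite sq2; field; lra.
Qed.

Lemma extend_wsite (Wr : rect) (w : {ffun 'I_(winW Wr) * 'I_(winH Wr) -> state}) ij :
  extend w (wsite ij) = w ij.
Proof.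
rewrite /extend; case: pickP => [ij' /eqP e | h]; last by have := h ij; rewrite eqxx.
congr (w _); move: e; case: ij' => i' j'; case: ij => i j; rewrite /wsite /= => -[e1 e2].
have ei : (i' : nat) = i by lia.
have ej : (j' : nat) = j by lia.
by congr pair; apply: val_inj.
Qed.

Section Concrete.
Variables (R : realType) (p : R) (Rr Rr' : rect) (s1 a s2 t1 b t2 : nat).
Let W := winW Rr'.
Let H := winH Rr'.
Hypotheses (hW : W = (s1 + a + s2)%N) (hH : H = (t1 + b + t2)%N) (a0 : (0 < a)%N) (b0 : (0 < b)%N).
Hypotheses (hx1 : rx1 Rr = rx1 Rr' + s1%:Z) (hx2 : rx2 Rr = rx1 Rr' + (s1 + a)%:Z - 1)
  (hX2 : rx2 Rr' = rx1 Rr' + W%:Z - 1)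
  (hy1 : ry1 Rr = ry1 Rr' + t1%:Z) (hy2 : ry2 Rr = ry1 Rr' + (t1 + b)%:Z - 1)
  (hY2 : ry2 Rr' = ry1 Rr' + H%:Z - 1).
Local Notation I := ('I_W * 'I_H)%type.

Definition colC (i : nat) := inR 0 s1 i || inR (s1 + a) s2 i.
Definition rowC (j : nat) := inR 0 t1 j || inR (t1 + b) t2 j.
Definition csL := filter (fun i : 'I_W => inR 0 s1 i) (enum 'I_W).
Definition csRt := filter (fun i : 'I_W => inR (s1 + a) s2 i) (enum 'I_W).
Definition csB := filter (fun j : 'I_H => inR 0 t1 j) (enum 'I_H).
Definition csT := filter (fun j : 'I_H => inR (t1 + b) t2 j) (enum 'I_H).
Definition SC (c : 'I_W) : seq I := [seq x : I <- enum {: I} | (x.1 == c) && ~~ rowC x.2].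
Definition SR (c : 'I_H) : seq I := [seq x : I <- enum {: I} | (x.2 == c) && ~~ colC x.1].
Definition KC (c : 'I_W) (w : cfg I) := [forall j : 'I_H, rowC j ==> (w (c, j) == None)].
Definition KR (c : 'I_H) (w : cfg I) := [forall i : 'I_W, colC i ==> (w (i, c) == None)].
Definition CEC (c : 'I_W) (w : cfg I) := [forall j : 'I_H, w (c, j) == None].
Definition CER (c : 'I_H) (w : cfg I) := [forall i : 'I_W, w (i, c) == None].

Lemma CEC_split c w : CEC c w = KC c w && all (fun x => w x == None) (SC c).
Proof.
apply/idP/idP.
  move/forallP => h; apply/andP; split.
    by apply/forallP => j; apply/implyP => _; exact: h.
  by apply/allP => -[i j]; rewrite mem_filter /= => /andP[/andP[/eqP -> _] _]; exact: h.
case/andP => /forallP hK /allP hS; apply/forallP => j; case hj: (rowC j).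
  by have := hK j; rewrite hj.
by apply: (hS (c, j)); rewrite mem_filter /= eqxx hj mem_enum.
Qed.

Lemma CER_split c w : CER c w = KR c w && all (fun x => w x == None) (SR c).
Proof.
apply/idP/idP.
  move/forallP => h; apply/andP; split.
    by apply/forallP => j; apply/implyP => _; exact: h.
  by apply/allP => -[i j]; rewrite mem_filter /= => /andP[/andP[/eqP -> _] _]; exact: h.
case/andP => /forallP hK /allP hS; apply/forallP => j; case hj: (colC j).
  by have := hK j; rewrite hj.
by apply: (hS (j, c)); rewrite mem_filter /= eqxx hj mem_enum.
Qed.

Lemma KC_indep c x w st cs : x \in flatten [seq SC c | c <- cs] -> KC c (upd _ w x st) = KC c w.
Proof.
case/flatten_mapP => c' _; rewrite mem_filter => /andP[/andP[_ hx] _].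
apply: eq_forallb => j; case hj: (rowC j) => //=; rewrite updE.
case: (eqVneq (c, j) x) => // e; by move: hx; rewrite -e /= hj.
Qed.

Lemma KR_indep c x w st cs : x \in flatten [seq SR c | c <- cs] -> KR c (upd _ w x st) = KR c w.
Proof.
case/flatten_mapP => c' _; rewrite mem_filter => /andP[/andP[_ hx] _].
apply: eq_forallb => j; case hj: (colC j) => //=; rewrite updE.
case: (eqVneq (j, c) x) => // e; by move: hx; rewrite -e /= hj.
Qed.

Lemma SC_uniq (cs : seq 'I_W) : uniq cs -> uniq (flatten [seq SC c | c <- cs]).
Proof. exact: (@flat_uniq _ _ (fun x : I => x.1) (fun x : I => ~~ rowC x.2)). Qed.
Lemma SR_uniq (cs : seq 'I_H) : uniq cs -> uniq (flatten [seq SR c | c <- cs]).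
Proof. exact: (@flat_uniq _ _ (fun x : I => x.2) (fun x : I => ~~ colC x.1)). Qed.

Lemma SC_size c : (size (SC c) <= b)%N.
Proof.
apply: (@size_filt_le _ _ _ _ _ (fun x : I => val x.2) t1 b).
  move=> [i j] [i' j']; rewrite !inE /= => /eqP -> /eqP -> /val_inj -> //.
move=> [i j] /= _; rewrite /rowC /inR negb_or => /andP[h1 h2].
have := ltn_ord j; move: hH; rewrite -/H; lia.
Qed.

Lemma SR_size c : (size (SR c) <= a)%N.
Proof.
apply: (@size_filt_le _ _ _ _ _ (fun x : I => val x.1) s1 a).
  move=> [i j] [i' j']; rewrite !inE /= => /eqP -> /eqP -> /val_inj -> //.
move=> [i j] /= _; rewrite /colC /inR negb_or => /andP[h1 h2].
have := ltn_ord i; move: hW; rewrite -/W; lia.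
Qed.


Lemma colE c (w : cfg I) : CEC c w -> col_empty (extend w) (rx1 Rr' + (c : nat)%:Z) (ry1 Rr') (ry2 Rr').
Proof.
move=> /forallP h y /andP[hyA hyB].
have hj : (`|y - ry1 Rr'| < H)%N by move: hY2 hyB hyA; lia.
have -> : (rx1 Rr' + (c : nat)%:Z, y) = wsite (c, Ordinal hj) by rewrite /wsite /=; congr pair; lia.
by rewrite extend_wsite; apply/eqP; apply: h.
Qed.

Lemma rowE c (w : cfg I) : CER c w -> row_empty (extend w) (rx1 Rr') (rx2 Rr') (ry1 Rr' + (c : nat)%:Z).
Proof.
move=> /forallP h y /andP[hyA hyB].
have hj : (`|y - rx1 Rr'| < W)%N by move: hX2 hyB hyA; lia.
have -> : (y, ry1 Rr' + (c : nat)%:Z) = wsite (Ordinal hj, c) by rewrite /wsite /=; congr pair; lia.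
by rewrite extend_wsite; apply/eqP; apply: h.
Qed.

Lemma Dev_L (w : cfg I) : no_dgap_cols (extend w) (rx1 Rr') (rx1 Rr - 1) (ry1 Rr') (ry2 Rr') ->
  Lch (CEC^~ w) false csL.
Proof.
move=> hnd; apply/negPn/negP => hL.
have hmv : map val csL = iota 0 s1 by apply: map_val_filter; move: hW; rewrite -/W; lia.
case: (@Lch_adj _ _ _ _ _ _ hmv hL) => [[]//|[c [c' [hc hc' e hce hce']]]].
have e' : (c' : nat) = (c : nat).+1 := e.
have c's : (c' < s1)%N by move: hc'; rewrite mem_filter /inR => /andP[/andP[_ h] _].
apply: hnd; exists (rx1 Rr' + (c : nat)%:Z); split.
- lia.
- rewrite hx1; lia.
- exact: colE.
- have -> : rx1 Rr' + (c : nat)%:Z + 1 = rx1 Rr' + (c' : nat)%:Z by rewrite e'; lia.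
  exact: colE.
Qed.

Lemma Dev_R (w : cfg I) : no_dgap_cols (extend w) (rx2 Rr + 1) (rx2 Rr') (ry1 Rr') (ry2 Rr') ->
  Lch (CEC^~ w) false csRt.
Proof.
move=> hnd; apply/negPn/negP => hL.
have hmv : map val csRt = iota (s1 + a) s2 by apply: map_val_filter; move: hW; rewrite -/W; lia.
case: (@Lch_adj _ _ _ _ _ _ hmv hL) => [[]//|[c [c' [hc hc' e hce hce']]]].
have e' : (c' : nat) = (c : nat).+1 := e.
have c's : (s1 + a <= c /\ c' < s1 + a + s2)%N.
  move: hc hc'; rewrite !mem_filter /inR => /andP[/andP[h1 _] _] /andP[/andP[_ h2] _]; lia.
apply: hnd; exists (rx1 Rr' + (c : nat)%:Z); split.
- rewrite hx2; lia.
- rewrite hX2; move: hW; rewrite -/W; lia.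
- exact: colE.
- have -> : rx1 Rr' + (c : nat)%:Z + 1 = rx1 Rr' + (c' : nat)%:Z by rewrite e'; lia.
  exact: colE.
Qed.

Lemma Dev_B (w : cfg I) : no_dgap_rows (extend w) (rx1 Rr') (rx2 Rr') (ry1 Rr') (ry1 Rr - 1) ->
  Lch (CER^~ w) false csB.
Proof.
move=> hnd; apply/negPn/negP => hL.
have hmv : map val csB = iota 0 t1 by apply: map_val_filter; move: hH; rewrite -/H; lia.
case: (@Lch_adj _ _ _ _ _ _ hmv hL) => [[]//|[c [c' [hc hc' e hce hce']]]].
have e' : (c' : nat) = (c : nat).+1 := e.
have c's : (c' < t1)%N by move: hc'; rewrite mem_filter /inR => /andP[/andP[_ h] _].
apply: hnd; exists (ry1 Rr' + (c : nat)%:Z); split.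
- lia.
- rewrite hy1; lia.
- exact: rowE.
- have -> : ry1 Rr' + (c : nat)%:Z + 1 = ry1 Rr' + (c' : nat)%:Z by rewrite e'; lia.
  exact: rowE.
Qed.

Lemma Dev_T (w : cfg I) : no_dgap_rows (extend w) (rx1 Rr') (rx2 Rr') (ry2 Rr + 1) (ry2 Rr') ->
  Lch (CER^~ w) false csT.
Proof.
move=> hnd; apply/negPn/negP => hL.
have hmv : map val csT = iota (t1 + b) t2 by apply: map_val_filter; move: hH; rewrite -/H; lia.
case: (@Lch_adj _ _ _ _ _ _ hmv hL) => [[]//|[c [c' [hc hc' e hce hce']]]].
have e' : (c' : nat) = (c : nat).+1 := e.
have c's : (t1 + b <= c /\ c' < t1 + b + t2)%N.
  move: hc hc'; rewrite !mem_filter /inR => /andP[/andP[h1 _] _] /andP[/andP[_ h2] _]; lia.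
apply: hnd; exists (ry1 Rr' + (c : nat)%:Z); split.
- rewrite hy2; lia.
- rewrite hY2; move: hH; rewrite -/H; lia.
- exact: rowE.
- have -> : ry1 Rr' + (c : nat)%:Z + 1 = ry1 Rr' + (c' : nat)%:Z by rewrite e'; lia.
  exact: rowE.
Qed.


Hypothesis hp : 0 < p < 1.
Definition mu (x : I) (st : state) : R := site_law p (wsite x) st.

Lemma mu_ge0 x st : 0 <= mu x st.
Proof. case/andP: hp => hp0 hp1; rewrite /mu /site_law; case: ifP => _; case: st => [[]|] //; lra. Qed.
Lemma mu_sum x : \sum_st mu x st = 1.
Proof. case/andP: hp => hp0 hp1; rewrite sumopt /mu /site_law; case: ifP => _ /=; lra. Qed.
Lemma mu_empty x : mu x None = 1 - p.
Proof. by rewrite /mu /site_law; case: ifP. Qed.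
Lemma mu_occ x : mu x (Some true) + mu x (Some false) = p.
Proof. case/andP: hp => hp0 hp1; rewrite /mu /site_law; case: ifP => _ /=; lra. Qed.

Definition FL (w : cfg I) := br R (Lch (CEC^~ w) false csL).
Definition FRt (w : cfg I) := br R (Lch (CEC^~ w) false csRt).
Definition FB (w : cfg I) := br R (Lch (CER^~ w) false csB).
Definition FT (w : cfg I) := br R (Lch (CER^~ w) false csT).
Definition lL := flatten [seq SC c | c <- csL].
Definition lRt := flatten [seq SC c | c <- csRt].
Definition lB := flatten [seq SR c | c <- csB].
Definition lT := flatten [seq SR c | c <- csT].

Lemma FC_dep (cs : seq 'I_W) (Q : pred 'I_W) : (forall c, c \in cs -> Q c) ->
  dep_on R I (fun x : I => Q x.1) (fun w => br R (Lch (CEC^~ w) false cs)).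
Proof.
move=> h w w' hw; congr (br _ _); apply: Lch_congr => c hc; apply: eq_forallb => j.
by rewrite hw //= h.
Qed.

Lemma FR_dep (cs : seq 'I_H) (Q : pred 'I_H) : (forall c, c \in cs -> Q c) ->
  dep_on R I (fun x : I => Q x.2) (fun w => br R (Lch (CER^~ w) false cs)).
Proof.
move=> h w w' hw; congr (br _ _); apply: Lch_congr => c hc; apply: eq_forallb => j.
by rewrite hw //= h.
Qed.

Lemma memSC x (cs : seq 'I_W) : x \in flatten [seq SC c | c <- cs] -> (x.1 \in cs) && ~~ rowC x.2.
Proof. by case/flatten_mapP => c hc; rewrite mem_filter => /andP[/andP[/eqP -> ->] _]; rewrite hc. Qed.
Lemma memSR x (cs : seq 'I_H) : x \in flatten [seq SR c | c <- cs] -> (x.2 \in cs) && ~~ colC x.1.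
Proof. by case/flatten_mapP => c hc; rewrite mem_filter => /andP[/andP[/eqP -> ->] _]; rewrite hc. Qed.

Lemma mem_cs (N m n : nat) (c : 'I_N) : c \in filter (fun i : 'I_N => inR m n i) (enum 'I_N) -> inR m n c.
Proof. by rewrite mem_filter => /andP[]. Qed.

Lemma indL x : x \in lRt ++ (lB ++ lT) -> indep R I x FL.
Proof.
move=> hx; apply: (@dep_indep R I _ _ x (@FC_dep csL (fun c : 'I_W => inR 0 s1 c) _)).
  by move=> c /mem_cs.
move: hx; rewrite !mem_cat => /or3P[/memSC/andP[/mem_cs h _]|/memSR/andP[_ h]|/memSR/andP[_ h]].
- by move: h; rewrite /inR => /andP[h1 h2]; apply/negP => /andP[h3 h4]; move: h1 h2 h3 h4; set n := nat_of_ord _; clearbody n; clear -n; lia.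
- by move: h; rewrite /colC negb_or => /andP[].
- by move: h; rewrite /colC negb_or => /andP[].
Qed.

Lemma indR x : x \in lL ++ (lB ++ lT) -> indep R I x FRt.
Proof.
move=> hx; apply: (@dep_indep R I _ _ x (@FC_dep csRt (fun c : 'I_W => inR (s1 + a) s2 c) _)).
  by move=> c /mem_cs.
move: hx; rewrite !mem_cat => /or3P[/memSC/andP[/mem_cs h _]|/memSR/andP[_ h]|/memSR/andP[_ h]].
- by move: h; rewrite /inR => /andP[h1 h2]; apply/negP => /andP[h3 h4]; move: h1 h2 h3 h4; set n := nat_of_ord _; clearbody n; clear -n; lia.
- by move: h; rewrite /colC negb_or => /andP[].
- by move: h; rewrite /colC negb_or => /andP[].
Qed.

Lemma indB x : x \in lL ++ (lRt ++ lT) -> indep R I x FB.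
Proof.
move=> hx; apply: (@dep_indep R I _ _ x (@FR_dep csB (fun c : 'I_H => inR 0 t1 c) _)).
  by move=> c /mem_cs.
move: hx; rewrite !mem_cat => /or3P[/memSC/andP[_ h]|/memSC/andP[_ h]|/memSR/andP[/mem_cs h _]].
- by move: h; rewrite /rowC negb_or => /andP[].
- by move: h; rewrite /rowC negb_or => /andP[].
- by move: h; rewrite /inR => /andP[h1 h2]; apply/negP => /andP[h3 h4]; move: h1 h2 h3 h4; set n := nat_of_ord _; clearbody n; clear -n; lia.
Qed.

Lemma indT x : x \in lL ++ (lRt ++ lB) -> indep R I x FT.
Proof.
move=> hx; apply: (@dep_indep R I _ _ x (@FR_dep csT (fun c : 'I_H => inR (t1 + b) t2 c) _)).
  by move=> c /mem_cs.
move: hx; rewrite !mem_cat => /or3P[/memSC/andP[_ h]|/memSC/andP[_ h]|/memSR/andP[/mem_cs h _]].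
- by move: h; rewrite /rowC negb_or => /andP[].
- by move: h; rewrite /rowC negb_or => /andP[].
- by move: h; rewrite /inR => /andP[h1 h2]; apply/negP => /andP[h3 h4]; move: h1 h2 h3 h4; set n := nat_of_ord _; clearbody n; clear -n; lia.
Qed.


Lemma indep_mul (x : I) (F1 F2 : cfg I -> R) : indep R I x F1 -> indep R I x F2 ->
  indep R I x (fun w => F1 w * F2 w).
Proof. by move=> h1 h2 w st; rewrite h1 h2. Qed.

Local Notation IL := (IntL R I mu).

Lemma factor :
  IL (lL ++ (lRt ++ (lB ++ lT))) (fun w => FL w * (FRt w * (FB w * FT w))) =
  fun w => IL lL FL w * (IL lRt FRt w * (IL lB FB w * IL lT FT w)).
Proof.
rewrite !IntL_cat.
rewrite (@IntL_mull R I mu lT FL); last by move=> i h; apply: indL; rewrite !mem_cat h ?orbT.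
rewrite (@IntL_mull R I mu lT FRt); last by move=> i h; apply: indR; rewrite !mem_cat h ?orbT.
rewrite (@IntL_mull R I mu lT FB); last by move=> i h; apply: indB; rewrite !mem_cat h ?orbT.
rewrite (@IntL_mull R I mu lB FL); last by move=> i h; apply: indL; rewrite !mem_cat h ?orbT.
rewrite (@IntL_mull R I mu lB FRt); last by move=> i h; apply: indR; rewrite !mem_cat h ?orbT.
rewrite (@IntL_mulr R I mu lB FB (IL lT FT)); last first.
  by move=> i h; apply: IntL_indep; apply: indT; rewrite !mem_cat h ?orbT.
rewrite (@IntL_mull R I mu lRt FL); last by move=> i h; apply: indL; rewrite !mem_cat h ?orbT.
rewrite (@IntL_mulr R I mu lRt FRt (fun w => IL lB FB w * IL lT FT w)); last first.
  move=> i h; apply: indep_mul; apply: IntL_indep; [apply: indB | apply: indT];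
  by rewrite !mem_cat h ?orbT.
rewrite (@IntL_mulr R I mu lL FL (fun w => IL lRt FRt w * (IL lB FB w * IL lT FT w))) //.
move=> i h; apply: indep_mul; [|apply: indep_mul]; apply: IntL_indep;
  [apply: indR | apply: indB | apply: indT]; by rewrite !mem_cat h ?orbT.
Qed.


Variables (Ga Gb ua ub : R).
Hypotheses (hGb : 0 <= Gb) (hub0 : 0 <= ub) (hubl : ub <= expR (- Gb))
  (hqb : expR (- Gb) ^+ 2 = ub * expR (- Gb) + ub * (1 - ub)) (hvb : 1 - ub <= (1 - p) ^+ b).
Hypotheses (hGa : 0 <= Ga) (hua0 : 0 <= ua) (hual : ua <= expR (- Ga))
  (hqa : expR (- Ga) ^+ 2 = ua * expR (- Ga) + ua * (1 - ua)) (hva : 1 - ua <= (1 - p) ^+ a).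

Lemma hv0 : 0 <= 1 - p <= 1.
Proof. case/andP: hp => h0 h1; apply/andP; split; lra. Qed.

Lemma IFC_le (cs : seq 'I_W) : uniq cs -> forall w,
  IL (flatten [seq SC c | c <- cs]) (fun w => br R (Lch (CEC^~ w) false cs)) w
    <= pw R Gb (nR R _ cs - 1 - 2 * kR R I _ KC cs w).
Proof.
move=> ucs w.
apply: le_trans (BA_le R I _ KC Gb hGb cs w).
have := (@chain R I mu mu_ge0 mu_sum (1 - p) mu_empty _ SC KC CEC Gb ub (1 - ub) b
  hGb hub0 hubl erefl hqb hv0 hvb cs).
move=> h; apply: (h _ _ _ _ false w).
- exact: SC_uniq.
- by move=> c _; apply: SC_size.
- by move=> c i w' st _ hi; apply: KC_indep hi.
- by move=> c w' _; apply: CEC_split.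
Qed.

Lemma IFR_le (cs : seq 'I_H) : uniq cs -> forall w,
  IL (flatten [seq SR c | c <- cs]) (fun w => br R (Lch (CER^~ w) false cs)) w
    <= pw R Ga (nR R _ cs - 1 - 2 * kR R I _ KR cs w).
Proof.
move=> ucs w.
apply: le_trans (BA_le R I _ KR Ga hGa cs w).
have := (@chain R I mu mu_ge0 mu_sum (1 - p) mu_empty _ SR KR CER Ga ua (1 - ua) a
  hGa hua0 hual erefl hqa hv0 hva cs).
move=> h; apply: (h _ _ _ _ false w).
- exact: SR_uniq.
- by move=> c _; apply: SR_size.
- by move=> c i w' st _ hi; apply: KR_indep hi.
- by move=> c w' _; apply: CER_split.
Qed.


Lemma prod_ge1 (T : Type) (r : seq T) (P : pred T) (F : T -> R) :
  (forall i, P i -> 1 <= F i) -> 1 <= \prod_(i <- r | P i) F i.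
Proof.
move=> h; have := @ler_prod R T r P (fun _ => 1) F.
rewrite big1_eq; apply => i Pi; rewrite ler01; exact: h.
Qed.

Lemma expR_count (T : eqType) (l : seq T) (P : pred T) (y : R) :
  expR (y * (count P l)%:R) = \prod_(c <- l) (if P c then expR y else 1).
Proof.
elim: l => [|c l IH]; first by rewrite big_nil mulr0 expR0.
rewrite big_cons /= natrD mulrDr expRD IH; case: (P c) => //=.
by rewrite mulr1.
by rewrite mulr0 expR0 mul1r.
Qed.

Lemma prod2_le (T : finType) (P Q : pred T) (g : T -> R) :
  (forall i, P i -> ~~ Q i) -> (forall i, 1 <= g i) ->
  (\prod_(i | P i) g i) * (\prod_(i | Q i) g i) <= \prod_i g i.
Proof.
move=> hPQ hg; rewrite (big_mkcond P) (big_mkcond Q) -big_split /=.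
apply: ler_prod => i _; apply/andP; split.
  by apply: mulr_ge0; case: ifP => _; rewrite ?ler01 //; apply: le_trans (hg i); rewrite ler01.
case hP: (P i); case hQ: (Q i); rewrite ?mul1r ?mulr1 //; try exact: hg.
by have := hPQ i hP; rewrite hQ.
Qed.

Definition corner (x : I) := colC x.1 && rowC x.2.
Definition psi (e : R) (x : I) (st : state) : R := if corner x && (st != None) then e else 1.

Lemma psi_ge1 e x st : 1 <= e -> 1 <= psi e x st.
Proof. by move=> he; rewrite /psi; case: ifP. Qed.

Lemma colbound (P : pred 'I_W) e (w : cfg I) : 1 <= e -> (forall c, P c -> colC c) ->
  \prod_(c <- filter P (enum 'I_W)) (if ~~ KC c w then e else 1)
   <= \prod_(c | P c) \prod_(j : 'I_H) psi e (c, j) (w (c, j)).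
Proof.
move=> he hP; rewrite big_filter big_enum_cond /=.
apply: ler_prod => c Pc; apply/andP; split; first by case: ifP => _; lra.
case hK: (KC c w) => /=.
  by apply: prod_ge1 => j _; apply: psi_ge1.
move/negbT: hK; rewrite /KC negb_forall => /existsP[j]; rewrite negb_imply => /andP[hj hw].
rewrite (bigD1 j) //= {1}/psi /corner /= hP // hj hw /=.
rewrite ler_peMr //; first lra.
by apply: prod_ge1 => j' _; apply: psi_ge1.
Qed.

Lemma rowbound (P : pred 'I_H) e (w : cfg I) : 1 <= e -> (forall c, P c -> rowC c) ->
  \prod_(c <- filter P (enum 'I_H)) (if ~~ KR c w then e else 1)
   <= \prod_(c | P c) \prod_(i : 'I_W) psi e (i, c) (w (i, c)).
Proof.
move=> he hP; rewrite big_filter big_enum_cond /=.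
apply: ler_prod => c Pc; apply/andP; split; first by case: ifP => _; lra.
case hK: (KR c w) => /=.
  by apply: prod_ge1 => j _; apply: psi_ge1.
move/negbT: hK; rewrite /KR negb_forall => /existsP[j]; rewrite negb_imply => /andP[hj hw].
rewrite (bigD1 j) //= {1}/psi /corner /= hP // hj hw /=.
rewrite ler_peMr //; first lra.
by apply: prod_ge1 => j' _; apply: psi_ge1.
Qed.


Lemma psi_mul e1 e2 x st : psi e1 x st * psi e2 x st = psi (e1 * e2) x st.
Proof. by rewrite /psi; case: ifP; rewrite ?mulr1. Qed.

Lemma sum_colC : (\sum_(i < W) colC i = s1 + s2)%N.
Proof.
rewrite (eq_bigr (fun i : 'I_W => inR 0 s1 i + inR (s1 + a) s2 i)%N); last first.
  move=> i _; rewrite /colC /inR; set n := nat_of_ord i.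
  case h1: (0 <= n < 0 + s1)%N; case h2: (s1 + a <= n < s1 + a + s2)%N => //=.
  by move: h1 h2 => /andP[_ h1] /andP[h2 _]; clear -h1 h2; lia.
rewrite big_split /= !sum_inR //; rewrite hW; clear; lia.
Qed.

Lemma sum_rowC : (\sum_(j < H) rowC j = t1 + t2)%N.
Proof.
rewrite (eq_bigr (fun i : 'I_H => inR 0 t1 i + inR (t1 + b) t2 i)%N); last first.
  move=> i _; rewrite /rowC /inR; set n := nat_of_ord i.
  case h1: (0 <= n < 0 + t1)%N; case h2: (t1 + b <= n < t1 + b + t2)%N => //=.
  by move: h1 h2 => /andP[_ h1] /andP[h2 _]; clear -h1 h2; lia.
rewrite big_split /= !sum_inR //; rewrite hH; clear; lia.
Qed.

Lemma sum_corner : (\sum_(x : I) corner x = (s1 + s2) * (t1 + t2))%N.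
Proof.
rewrite -(pair_bigA _ (fun (i : 'I_W) (j : 'I_H) => nat_of_bool (colC i && rowC j))) /=.
rewrite -sum_colC -sum_rowC big_distrl /=; apply: eq_bigr => i _.
rewrite big_distrr /=; apply: eq_bigr => j _.
by case: (colC i); case: (rowC j).
Qed.

Lemma EE_psi e : 1 <= e ->
  EE R I mu (fun w => \prod_x psi e x (w x)) <= expR (p * (e - 1) * ((s1 + s2) * (t1 + t2))%:R).
Proof.
move=> he; case/andP: hp => hp0 hp1.
rewrite EE_prod.
rewrite -sum_corner natr_sum mulr_sumr expR_sum.
apply: ler_prod => x _; rewrite sumopt /psi /=.
case hc: (corner x) => /=.
  rewrite !mulr1 mu_empty -addrA -mulrDl mu_occ; apply/andP; split; first nra.
  have := expR_ge1Dx (p * (e - 1)); lra.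
rewrite !mulr1 mulr0 expR0 -(mu_sum x) sumopt lexx andbT.
by apply: addr_ge0; [apply: addr_ge0|]; apply: mu_ge0.
Qed.


Lemma size_cs (N m n : nat) : (m + n <= N)%N ->
  nR R _ (filter (fun i : 'I_N => inR m n i) (enum 'I_N)) = n%:R.
Proof. by move=> h; rewrite /nR -(size_map val) map_val_filter // size_iota. Qed.

Lemma e_ge1 (G : R) : 0 <= G -> 1 <= expR (2 * G).
Proof. move=> h; have : expR 0 <= expR (2 * G) by rewrite ler_expR; lra. by rewrite expR0. Qed.

Lemma colprod (w : cfg I) :
  expR (2 * Gb * kR R I _ KC csL w) * expR (2 * Gb * kR R I _ KC csRt w)
   <= \prod_x psi (expR (2 * Gb)) x (w x).
Proof.
have he := e_ge1 Gb hGb.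
rewrite /kR !expR_count.
apply: le_trans (ler_pM _ _ (colbound (fun c : 'I_W => inR 0 s1 c) _ w he _)
                           (colbound (fun c : 'I_W => inR (s1 + a) s2 c) _ w he _)) _.
- by apply: prodr_ge0 => c _; case: ifP => _; lra.
- by apply: prodr_ge0 => c _; case: ifP => _; lra.
- by move=> c h; rewrite /colC h.
- by move=> c h; rewrite /colC h orbT.
rewrite [X in _ <= X](eq_bigr (fun x : I => psi (expR (2 * Gb)) (x.1, x.2) (w (x.1, x.2)))); last by case.
rewrite -(pair_bigA _ (fun i j => psi (expR (2 * Gb)) (i, j) (w (i, j)))) /=; apply: prod2_le.
  move=> i; rewrite /inR => /andP[_ h1]; apply/negP => /andP[h2 _]; move: h1 h2.
  by set n := nat_of_ord i; clearbody n; clear -n; lia.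
by move=> i; apply: prod_ge1 => j _; apply: psi_ge1.
Qed.

Lemma rowprod (w : cfg I) :
  expR (2 * Ga * kR R I _ KR csB w) * expR (2 * Ga * kR R I _ KR csT w)
   <= \prod_x psi (expR (2 * Ga)) x (w x).
Proof.
have he := e_ge1 Ga hGa.
rewrite /kR !expR_count.
apply: le_trans (ler_pM _ _ (rowbound (fun c : 'I_H => inR 0 t1 c) _ w he _)
                           (rowbound (fun c : 'I_H => inR (t1 + b) t2 c) _ w he _)) _.
- by apply: prodr_ge0 => c _; case: ifP => _; lra.
- by apply: prodr_ge0 => c _; case: ifP => _; lra.
- by move=> c h; rewrite /rowC h.
- by move=> c h; rewrite /rowC h orbT.
rewrite [X in _ <= X](eq_bigr (fun x : I => psi (expR (2 * Ga)) (x.1, x.2) (w (x.1, x.2)))); last by case.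
rewrite -(pair_bigA _ (fun i j => psi (expR (2 * Ga)) (i, j) (w (i, j)))) /= [X in _ <= X]exchange_big /=; apply: prod2_le.
  move=> i; rewrite /inR => /andP[_ h1]; apply/negP => /andP[h2 _]; move: h1 h2.
  by set n := nat_of_ord i; clearbody n; clear -n; lia.
by move=> i; apply: prod_ge1 => j _; apply: psi_ge1.
Qed.


Lemma pt_bound (w : cfg I) :
  IL lL FL w * (IL lRt FRt w * (IL lB FB w * IL lT FT w)) <=
  expR (- Gb * ((s1 + s2)%:R - 2) - Ga * ((t1 + t2)%:R - 2)) *
    \prod_x psi (expR (2 * Gb) * expR (2 * Ga)) x (w x).
Proof.
have u1 : uniq csL by rewrite filter_uniq ?enum_uniq.
have u2 : uniq csRt by rewrite filter_uniq ?enum_uniq.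
have u3 : uniq csB by rewrite filter_uniq ?enum_uniq.
have u4 : uniq csT by rewrite filter_uniq ?enum_uniq.
have F0 : forall l (F : cfg I -> R), (forall w, 0 <= F w) -> 0 <= IL l F w.
  by move=> l F h; apply: (IntL_ge0 R I mu mu_ge0 mu_sum l F h w).
have h1 := IFC_le csL u1 w.
have h2 := IFC_le csRt u2 w.
have h3 := IFR_le csB u3 w.
have h4 := IFR_le csT u4 w.
have g1 : 0 <= IL lL FL w by apply: F0 => w'; apply: br_ge0.
have g2 : 0 <= IL lRt FRt w by apply: F0 => w'; apply: br_ge0.
have g3 : 0 <= IL lB FB w by apply: F0 => w'; apply: br_ge0.
have g4 : 0 <= IL lT FT w by apply: F0 => w'; apply: br_ge0.
have h34 := ler_pM g3 g4 h3 h4.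
have h234 := ler_pM g2 (mulr_ge0 g3 g4) h2 h34.
have h1234 := ler_pM g1 (mulr_ge0 g2 (mulr_ge0 g3 g4)) h1 h234.
apply: le_trans h1234 _.
have szL : nR R _ csL = s1%:R by apply: size_cs; rewrite hW; clear; lia.
have szR : nR R _ csRt = s2%:R by apply: size_cs; rewrite hW; clear; lia.
have szB : nR R _ csB = t1%:R by apply: size_cs; rewrite hH; clear; lia.
have szT : nR R _ csT = t2%:R by apply: size_cs; rewrite hH; clear; lia.
rewrite /pw szL szR szB szT.
set kL := kR R I _ KC csL w; set kRr := kR R I _ KC csRt w.
set kB := kR R I _ KR csB w; set kT := kR R I _ KR csT w.
have -> : expR (- Gb * (s1%:R - 1 - 2 * kL)) * (expR (- Gb * (s2%:R - 1 - 2 * kRr)) *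
    (expR (- Ga * (t1%:R - 1 - 2 * kB)) * expR (- Ga * (t2%:R - 1 - 2 * kT)))) =
  expR (- Gb * ((s1 + s2)%:R - 2) - Ga * ((t1 + t2)%:R - 2)) *
  ((expR (2 * Gb * kL) * expR (2 * Gb * kRr)) * (expR (2 * Ga * kB) * expR (2 * Ga * kT))).
  by rewrite -!expRD; congr expR; rewrite !natrD; ring.
apply: ler_wpM2l; first exact: expR_ge0.
rewrite -(eq_bigr _ (fun x _ => psi_mul (expR (2 * Gb)) (expR (2 * Ga)) x (w x))) big_split /=.
apply: ler_pM.
- by apply: mulr_ge0; apply: expR_ge0.
- by apply: mulr_ge0; apply: expR_ge0.
- exact: colprod.
- exact: rowprod.
Qed.

Lemma main_bound : Pp p Rr' (Dev Rr Rr') <=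
  expR (- Gb * ((s1 + s2)%:R - 2) - Ga * ((t1 + t2)%:R - 2)) *
  expR (p * (expR (2 * Gb) * expR (2 * Ga) - 1) * ((s1 + s2) * (t1 + t2))%:R).
Proof.
have -> : Pp p Rr' (Dev Rr Rr') = EE R I mu (fun w => br R `[< Dev Rr Rr' (extend w) >]) by [].
apply: le_trans (EE_le R I mu mu_ge0 _ (fun w => FL w * (FRt w * (FB w * FT w))) _) _.
  move=> w; case: asboolP => [[e1 e2 e3 e4]|_].
    by rewrite /FL /FRt /FB /FT (Dev_L w e1) (Dev_R w e2) (Dev_B w e3) (Dev_T w e4) /br !mulr1.
  by rewrite {1}/br; apply: mulr_ge0; [|apply: mulr_ge0; [|apply: mulr_ge0]]; apply: br_ge0.
rewrite -(E_IntL R I mu mu_sum (lL ++ (lRt ++ (lB ++ lT)))) factor.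
apply: le_trans (EE_le R I mu mu_ge0 _ _ pt_bound) _.
rewrite EE_scale; apply: ler_wpM2l; first exact: expR_ge0.
apply: EE_psi.
have := e_ge1 Gb hGb; have := e_ge1 Ga hGa; nra.
Qed.

End Concrete.

Lemma Gsetup (R : realType) (p : R) (n : nat) : 0 < p < 1 -> (0 < n)%N ->
  [/\ 0 <= gfun (n%:R * - ln (1 - p)), 0 <= 1 - (1 - p) ^+ n,
      1 - (1 - p) ^+ n <= expR (- gfun (n%:R * - ln (1 - p))),
      expR (- gfun (n%:R * - ln (1 - p))) ^+ 2 =
        (1 - (1 - p) ^+ n) * expR (- gfun (n%:R * - ln (1 - p))) + (1 - (1 - p) ^+ n) * (1 - (1 - (1 - p) ^+ n)) &
      1 - (1 - (1 - p) ^+ n) <= (1 - p) ^+ n].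
Proof.
move=> /andP[p0 p1] n0.
have hv : expR (- (n%:R * - ln (1 - p))) = (1 - p) ^+ n.
  by rewrite mulrN opprK expRM_natl lnK // posrE; lra.
have v0 : 0 < (1 - p) ^+ n by apply: exprn_gt0; lra.
have v1 : (1 - p) ^+ n < 1 by rewrite exprn_ilt1 ?(gtn_eqF n0) //; lra.
set u := 1 - (1 - p) ^+ n.
have hu : 0 < u <= 1 by apply/andP; split; rewrite /u; lra.
have [b0 b1 b2 b3] := @beta_props R u hu.
have hG : gfun (n%:R * - ln (1 - p)) = - ln (beta u) by rewrite /gfun hv.
have hl : expR (- gfun (n%:R * - ln (1 - p))) = beta u by rewrite hG opprK lnK // posrE.
rewrite hl; split => //.
- by rewrite hG oppr_ge0; apply: ln_le0.
- rewrite /u; lra.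
- rewrite /u; lra.
Qed.

Theorem lemma6 (R : realType) (p : R) (a b s t : nat) (Rr Rr' : rect) :
  0 < p < 1 ->
  (0 < a)%N -> (0 < b)%N ->
  subrect Rr Rr' ->
  rwidth Rr = a%:Z -> rheight Rr = b%:Z ->
  rwidth Rr' = (a + s)%N%:Z -> rheight Rr' = (b + t)%N%:Z ->
  let q := - ln (1 - p) in
  Pp p Rr' (Dev Rr Rr') <=
  expR (- s%:R * gfun (b%:R * q) - t%:R * gfun (a%:R * q)
        + 2 * (gfun (b%:R * q) + gfun (a%:R * q))
        + s%:R * t%:R * q * expR (2 * (gfun (b%:R * q) + gfun (a%:R * q)))).
Proof.
move=> hp a0 b0 hsub hw hh hw' hh'; rewrite /subrect in hsub; case: hsub => hX1 hX2 hY1 hY2.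
cbv zeta; set q := - ln (1 - p).
move: hw hh hw' hh'; rewrite /rwidth /rheight => hw hh hw' hh'.
set s1 := `|rx1 Rr - rx1 Rr'|%N; set s2 := `|rx2 Rr' - rx2 Rr|%N.
set t1 := `|ry1 Rr - ry1 Rr'|%N; set t2 := `|ry2 Rr' - ry2 Rr|%N.
have hs : s = (s1 + s2)%N by rewrite /s1 /s2; lia.
have ht : t = (t1 + t2)%N by rewrite /t1 /t2; lia.
have hW : winW Rr' = (s1 + a + s2)%N by rewrite /winW /rwidth /s1 /s2; lia.
have hH : winH Rr' = (t1 + b + t2)%N by rewrite /winH /rheight /t1 /t2; lia.
have hx1 : rx1 Rr = rx1 Rr' + s1%:Z by rewrite /s1; lia.
have hx2 : rx2 Rr = rx1 Rr' + (s1 + a)%N%:Z - 1 by rewrite /s1; lia.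
have hX2' : rx2 Rr' = rx1 Rr' + (winW Rr')%:Z - 1 by rewrite hW /s1 /s2; lia.
have hy1 : ry1 Rr = ry1 Rr' + t1%:Z by rewrite /t1; lia.
have hy2 : ry2 Rr = ry1 Rr' + (t1 + b)%N%:Z - 1 by rewrite /t1; lia.
have hY2' : ry2 Rr' = ry1 Rr' + (winH Rr')%:Z - 1 by rewrite hH /t1 /t2; lia.
have [gb0 ub0 ubl qb vb] := @Gsetup R p b hp b0.
have [ga0 ua0 ual qa va] := @Gsetup R p a hp a0.
have M := @main_bound R p Rr Rr' s1 a s2 t1 b t2 hW hH a0 b0 hx1 hx2 hX2' hy1 hy2 hY2' hp _ _ _ _ gb0 ub0 ubl qb vb ga0 ua0 ual qa va.
apply: le_trans M _.
rewrite -expRD ler_expR hs ht.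
rewrite -/q.
set Gb := gfun (b%:R * q); set Ga := gfun (a%:R * q).
have -> : expR (2 * (Gb + Ga)) = expR (2 * Gb) * expR (2 * Ga) by rewrite mulrDr expRD.
set k := expR (2 * Gb) * expR (2 * Ga).
have k1 : 1 <= k.
  rewrite /k -expRD; have : expR 0 <= expR (2 * Gb + 2 * Ga) by rewrite ler_expR; clear -gb0 ga0; lra.
  by rewrite expR0.
have pq : p <= q.
  case/andP: hp => p0 p1; rewrite /q lerNr; have := @le_ln1Dx R (- p); clear -p0 p1; lra.
clearbody k Gb Ga q.
have hpk : p * (k - 1) <= q * k.
  case/andP: hp => p0 p1; clear -p0 p1 pq k1.
  have : p * k <= q * k by apply: ler_wpM2r; [lra | exact: pq].
  lra.
have ST : 0 <= ((s1 + s2) * (t1 + t2))%:R :> R by [].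
have := ler_wpM2r ST hpk.
rewrite natrM => hYZ.
apply: le_trans (lerD (lexx _) hYZ) _.
rewrite le_eqVlt; apply/orP; left; apply/eqP; ring.
Qed.
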